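(* For every natural number $n$, $$\Phi^*_n(x)=\prod_{\substack{d\mid n\\ \kappa(d)=\kappa(n)}}\Phi_d(x).$$ Equivalently, $\Phi^*_n(x)=\prod_{d\mid n/\kappa(n)}\Phi_{\kappa(n)}(x^d)$.
   Context: $\Phi_d(x)=\prod_{1\le j\le d,\ \gcd(j,d)=1}(x-\zeta_d^j)$ is the $d$-th cyclotomic polynomial, $\zeta_d=e^{2\pi i/d}$. A divisor $d$ of $n$ is unitary, $d\mid\mid n$, if $\gcd(d,n/d)=1$; $(j,n)_*=\max\{d: d\mid j,\ d\mid\mid n\}$; the unitary cyclotomic polynomial is $\Phi^*_n(x)=\prod_{1\le j\le n,\ (j,n)_*=1}(x-\zeta_n^j)$. $\kappa(n)=\prod_{p\mid n}p$ denotes the squarefree kernel of $n$ (with $\kappa(1)=1$). *)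

(* Defs.v *)
From HB Require Import structures.
From mathcomp Require Import all_boot all_order all_algebra all_field.
Set Implicit Arguments. Unset Strict Implicit. Unset Printing Implicit Defensive.
Import Order.TTheory GRing.Theory Num.Theory.

Definition kappa (n : nat) : nat := \prod_(p <- primes n) p.

Definition unitary_dvd (d n : nat) : bool := (d %| n) && coprime d (n %/ d).

Definition ugcd (j n : nat) : nat :=
  \max_(d <- divisors n | unitary_dvd d n && (d %| j)) d.

Local Open Scope ring_scope.

(* Phi_d(x) = prod_{1<=j<=d, gcd(j,d)=1} (x - zeta_d^j), with zeta : nat -> algC
   a family of roots of unity (zeta d intended primitive d-th root). *)
Definition cycl (zeta : nat -> algC) (d : nat) : {poly algC} :=
  \prod_(1 <= j < d.+1 | coprime j d) ('X - (zeta d ^+ j)%:P).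

Definition ucycl (zeta : nat -> algC) (n : nat) : {poly algC} :=
  \prod_(1 <= j < n.+1 | ugcd j n == 1%N) ('X - (zeta n ^+ j)%:P).

(* Main.v *)
Require Import Defs.
From HB Require Import structures.
From mathcomp Require Import all_boot all_order all_algebra all_field.
Import Order.TTheory GRing.Theory Num.Theory.


Lemma prime_dvd_seq p s : prime p -> all prime s -> p %| \prod_(q <- s) q -> p \in s.
Proof.
move=> pp; elim: s => [|q s IH] /=; first by rewrite big_nil dvdn1 => _ /eqP p1; rewrite p1 in pp.
case/andP=> pq ps; rewrite big_cons Euclid_dvdM // inE => /orP[|/(IH ps)->]; last by rewrite orbT.
by rewrite dvdn_prime2 // => ->.
Qed.

Lemma kappa_gt0 n : 0 < kappa n.
Proof.
rewrite /kappa big_seq; apply: (big_ind (fun x => 0 < x)) => // [a b|p]; first by rewrite muln_gt0 => ->.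
by rewrite mem_primes => /and3P[/prime_gt0].
Qed.

Lemma dvd_kappa p n : prime p -> 0 < n -> (p %| kappa n) = (p %| n).
Proof.
move=> pp n0; apply/idP/idP => H.
  have: p \in primes n.
    apply: prime_dvd_seq => //; apply/allP => q; by rewrite mem_primes => /andP[].
  by rewrite mem_primes => /and3P[].
have pin : p \in primes n by rewrite mem_primes pp n0.
by rewrite /kappa (big_rem p pin) /= dvdn_mulr.
Qed.

Lemma kappa_dvd n : 0 < n -> kappa n %| n.
Proof.
move=> n0; rewrite {2}(prod_prime_decomp n0) /kappa /primes big_map [X in _ %| X]big_seq big_seq.
apply: (big_ind2 (fun a b => a %| b)) => //; first by move=> *; apply: dvdn_mul.
case=> p e /= H; rewrite -{1}(expn1 p) dvdn_exp2l //.
by case/mem_prime_decomp: H.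
Qed.

Lemma kappa_eq a b : 0 < a -> 0 < b ->
  (forall p, prime p -> (p %| a) = (p %| b)) -> kappa a = kappa b.
Proof.
move=> a0 b0 H; rewrite /kappa; suff ->: primes a = primes b by [].
by apply/eq_primes => p; rewrite !mem_primes a0 b0; case pp: (prime p) => //=; rewrite H.
Qed.

Lemma ugcd_ge1 j n : 0 < n -> 1 <= ugcd j n.
Proof.
move=> n0; rewrite /ugcd; apply: (@leq_bigmax_seq _ _ _ (fun d => d) 1).
  by rewrite divisor1.
by rewrite /unitary_dvd dvd1n coprime1n dvd1n.
Qed.

Lemma ugcd1P j n : 0 < n ->
  reflect (forall p, prime p -> p %| n -> ~~ (p ^ logn p n %| j)) (ugcd j n == 1).
Proof.
move=> n0; rewrite eqn_leq ugcd_ge1 // andbT.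
apply: (iffP (bigmax_leqP_seq _ _ _ _)) => H.
  move=> p pp pn; apply/negP => pj.
  have e0 : 0 < logn p n by rewrite logn_gt0 mem_primes pp n0.
  have := H (p ^ logn p n); rewrite -dvdn_divisors // /unitary_dvd pfactor_dvdnn pj /=.
  have -> : coprime (p ^ logn p n) (n %/ p ^ logn p n).
    rewrite coprime_pexpl // prime_coprime //; apply/negP => pd.
    have : 0 < logn p (n %/ p ^ logn p n).
      by rewrite logn_gt0 mem_primes pp pd divn_gt0 ?expn_gt0 ?prime_gt0 // dvdn_leq // pfactor_dvdnn.
    by rewrite logn_div ?pfactor_dvdnn // pfactorK // subnn.
  move=> /(_ isT isT); rewrite leqNgt => /negP; apply.
  by rewrite -{1}(expn0 p) ltn_exp2l ?prime_gt1.
move=> d; rewrite -dvdn_divisors // => dn /andP[/andP[_ cd] dj].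
rewrite leqNgt; apply/negP => d1.
have [p pp pd] : exists2 p, prime p & p %| d.
  by exists (pdiv d); [apply: pdiv_prime | apply: pdiv_dvd].
have pn : p %| n := dvdn_trans pd dn.
have d0 : 0 < d by apply: ltnW.
have : p ^ logn p n %| d.
  rewrite pfactor_dvdn //.
  have nd0 : 0 < n %/ d by rewrite divn_gt0 // dvdn_leq.
  have -> : logn p n = logn p (d * (n %/ d)) by rewrite mulnC divnK.
  by rewrite (lognM _ d0 nd0) (@logn_coprime p (n %/ d) (coprime_dvdl pd cd)) addn0.
by move=> /dvdn_trans /(_ dj); apply/negP; apply: H.
Qed.

Lemma pe_dvd p n j : prime p -> 0 < n -> p %| n ->
  (p ^ logn p n %| j) = ~~ (p %| n %/ gcdn j n).
Proof.
move=> pp n0 pn.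
have g0 : 0 < gcdn j n by rewrite gcdn_gt0 n0 orbT.
have gn : gcdn j n %| n by apply: dvdn_gcdr.
have -> : (p ^ logn p n %| j) = (p ^ logn p n %| gcdn j n) by rewrite dvdn_gcd pfactor_dvdnn andbT.
rewrite pfactor_dvdn //.
have ng0 : 0 < n %/ gcdn j n by rewrite divn_gt0 // dvdn_leq.
have -> : (p %| n %/ gcdn j n) = (p \in primes (n %/ gcdn j n)) by rewrite mem_primes pp ng0.
by rewrite -logn_gt0 logn_div // subn_gt0 leqNgt.
Qed.

Lemma ugcd_kappa j n : 0 < n -> (ugcd j n == 1) = (kappa (n %/ gcdn j n) == kappa n).
Proof.
move=> n0.
have gn : gcdn j n %| n by apply: dvdn_gcdr.
have g0 : 0 < gcdn j n by rewrite gcdn_gt0 n0 orbT.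
have ng0 : 0 < n %/ gcdn j n by rewrite divn_gt0 // dvdn_leq.
apply/ugcd1P/eqP => // H.
  apply: kappa_eq => // p pp; apply/idP/idP => [|pn]; first by move/dvdn_trans; apply; apply: dvdn_div.
  by have := H p pp pn; rewrite pe_dvd // negbK.
move=> p pp pn; rewrite pe_dvd // negbK -dvd_kappa // H dvd_kappa //.
Qed.

Local Open Scope ring_scope.

Lemma shift_prod (R : comNzRingType) n (G : nat -> R) : (0 < n)%N -> G n = G 0%N ->
  \prod_(1 <= j < n.+1) G j = \prod_(0 <= j < n) G j.
Proof.
case: n => // n _ Gn; rewrite big_add1 /= big_nat_recr //= big_nat_recl //= Gn mulrC.
congr (_ * _); apply: eq_bigr => i _; by rewrite addn1.
Qed.

Lemma cycl_cyclotomic (zeta : nat -> algC)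
  (hzeta : forall d : nat, (0 < d)%N -> d.-primitive_root (zeta d)) d w :
  (0 < d)%N -> d.-primitive_root w -> cycl zeta d = cyclotomic w d.
Proof.
move=> d0 pw; rewrite -(Cintr_Cyclotomic pw) (Cintr_Cyclotomic (hzeta d d0)).
rewrite /cycl /cyclotomic big_mkcond shift_prod //=.
  by rewrite -big_mkcond big_mkord.
by rewrite /coprime gcdnn gcd0n prim_expr_order ?expr0 // hzeta.
Qed.

Lemma prod_cyclotomic_filter (F : fieldType) (n : nat) (z : F) (Q : pred nat) :
  n.-primitive_root z ->
  \prod_(k < n | Q (n %/ gcdn k n)%N) ('X - (z ^+ k)%:P)
   = \prod_(d <- divisors n | Q d) cyclotomic (z ^+ (n %/ d)) d.
Proof.
move=> prim_z; have n_gt0 := prim_order_gt0 prim_z.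
have in_d d: (d %| n)%N -> val (@inord n d) = d by move/dvdn_leq/inordK=> /= ->.
have dv_n k: (n %/ gcdn k n %| n)%N.
  by rewrite -{3}(divnK (dvdn_gcdr k n)) dvdn_mulr.
have [uDn _ inDn] := divisors_correct n_gt0.
have defDn: divisors n = map val (map (@inord n) (divisors n)).
  by rewrite -map_comp map_id_in // => d; rewrite inDn => /in_d.
rewrite big_mkcond [RHS]big_mkcond /=.
rewrite defDn big_map [RHS]big_uniq /=; last first.
  by rewrite -(map_inj_uniq val_inj) -defDn.
pose h (k : 'I_n) : 'I_n.+1 := inord (n %/ gcdn k n).
rewrite (partition_big h (dvdn^~ n)) /= => [|k _]; last by rewrite in_d ?dv_n.
apply: eq_big => d; first by rewrite -(mem_map val_inj) -defDn inDn.
set q := (n %/ d)%N => d_dv_n.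
have hQ : forall k : 'I_n, h k == d -> Q (n %/ gcdn k n)%N = Q d.
  by move=> k /eqP <-; rewrite in_d ?dv_n.
rewrite (eq_bigr (fun k : 'I_n => if Q d then 'X - (z ^+ k)%:P else 1)); last first.
  by move=> k /hQ ->.
case: (Q d); last by rewrite big1.
have [q_gt0 d_gt0]: (0 < q /\ 0 < d)%N by apply/andP; rewrite -muln_gt0 divnK.
have fP (k : 'I_d): (q * k < n)%N by rewrite divn_mulAC ?ltn_divLR ?ltn_pmul2l.
rewrite (reindex (fun k => Ordinal (fP k))); last first.
  have f'P (k : 'I_n): (k %/ q < d)%N by rewrite ltn_divLR // mulnC divnK.
  exists (fun k => Ordinal (f'P k)) => [k _ | k /eqnP/=].
    by apply: val_inj; rewrite /= mulKn.
  rewrite in_d // => Dd; apply: val_inj; rewrite /= mulnC divnK // /q -Dd.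
  by rewrite divnA ?mulKn ?dvdn_gcdl ?dvdn_gcdr.
apply: eq_big => k; rewrite ?exprM // -val_eqE in_d //=.
rewrite -eqn_mul ?dvdn_gcdr ?gcdn_gt0 ?n_gt0 ?orbT //.
rewrite -[n in gcdn _ n](divnK d_dv_n) -muln_gcdr mulnCA mulnA divnK //.
by rewrite mulnC eqn_mul // divnn n_gt0 eq_sym.
Qed.

Lemma XnsubC_prod (F : fieldType) d (w c : F) : d.-primitive_root w -> c != 0 ->
  \prod_(0 <= i < d) ('X - (c * w ^+ i)%:P) = 'X^d - (c ^+ d)%:P.
Proof.
move=> pw c0.
have key (p q : {poly F}) : p \Po (c *: 'X) = q \Po (c *: 'X) -> p = q.
  move=> H; rewrite -[p]comp_polyXr -[q]comp_polyXr.
  have -> : 'X = (c *: 'X) \Po (c^-1 *: 'X) :> {poly F}.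
    by rewrite comp_polyZ comp_polyX scalerA mulfV // scale1r.
  by rewrite !comp_polyA H.
apply: key; rewrite rmorph_prod /=.
rewrite (eq_bigr (fun i => c *: ('X - (w ^+ i)%:P))); last first.
  by move=> i _; rewrite comp_polyB comp_polyX comp_polyC scalerBr scale_polyC.
rewrite scaler_prod prodr_const_nat subn0 (factor_Xn_sub_1 pw).
rewrite comp_polyB comp_polyC rmorphXn /= comp_polyX exprZn scalerBr -alg_polyC.
by [].
Qed.

Lemma double_prod (R : comNzRingType) k d (G : nat -> R) :
  \prod_(0 <= j < k | coprime j k) \prod_(0 <= i < d) G (j + k * i)%N
  = \prod_(0 <= m < (k * d)%N | coprime m k) G m.
Proof.
elim: d => [|d IH].
  by rewrite muln0 [RHS]big_geq // big1 // => j _; rewrite big_geq.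
rewrite (eq_bigr (fun j => (\prod_(0 <= i < d) G (j + k*i)%N) * G (j + k*d)%N)); last first.
  by move=> j _; rewrite big_nat_recr.
rewrite big_split /= IH mulnS addnC [RHS](@big_cat_nat _ _ _ (k * d)) ?leq_addr //=.
congr (_ * _).
rewrite -[in RHS](add0n (k * d)%N) big_addn add0n addKn.
apply: eq_bigl => j; rewrite /coprime [gcdn (_ + _) _]gcdnC [gcdn j k]gcdnC addnC [(k * d)%N]mulnC gcdnMDl.
by [].
Qed.

Lemma coprime_sub m k d : (0 < d)%N -> (forall p, prime p -> (p %| d)%N -> (p %| k)%N) ->
  coprime m k -> coprime m d.
Proof.
move=> d0 H cmk; rewrite /coprime.
have g0 : (0 < gcdn m d)%N by rewrite gcdn_gt0 d0 orbT.
rewrite eqn_leq g0 andbT leqNgt; apply/negP => g1.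
have [p pp pg] : exists2 p, prime p & (p %| gcdn m d)%N.
  by exists (pdiv (gcdn m d)); [apply: pdiv_prime | apply: pdiv_dvd].
have pm : (p %| m)%N := dvdn_trans pg (dvdn_gcdl _ _).
have pd : (p %| d)%N := dvdn_trans pg (dvdn_gcdr _ _).
have : (p %| gcdn m k)%N by rewrite dvdn_gcd pm H.
by rewrite (eqP cmk) dvdn1 => /eqP p1; rewrite p1 in pp.
Qed.

Lemma cycl_comp (zeta : nat -> algC)
  (hzeta : forall d : nat, (0 < d)%N -> d.-primitive_root (zeta d)) k d :
  (0 < k)%N -> (0 < d)%N -> (forall p, prime p -> (p %| d)%N -> (p %| k)%N) ->
  cycl zeta k \Po 'X^d = cycl zeta (k * d)%N.
Proof.
move=> k0 d0 H.
have kd0 : (0 < k * d)%N by rewrite muln_gt0 k0.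
have pu := hzeta _ kd0; set u := zeta (k * d)%N in pu *.
have pk : k.-primitive_root (u ^+ d).
  by have := dvdn_prim_root pu (dvdn_mulr d (dvdnn k)); rewrite mulKn.
have pd : d.-primitive_root (u ^+ k).
  by have := dvdn_prim_root pu (dvdn_mull k (dvdnn d)); rewrite mulnK.
have u0 : u != 0.
  apply/eqP => u0; have := prim_expr_order pu; rewrite u0 expr0n.
  by rewrite eqn0Ngt kd0 /= => /eqP; rewrite eq_sym oner_eq0.
rewrite (cycl_cyclotomic zeta hzeta _ _ k0 pk) (cycl_cyclotomic zeta hzeta _ _ kd0 pu).
rewrite /cyclotomic rmorph_prod /=.
rewrite (eq_bigr (fun j : 'I_k => \prod_(0 <= i < d) ('X - (u ^+ (j + k * i)%N)%:P))); last first.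
  move=> j _; rewrite comp_polyB comp_polyX comp_polyC -exprM mulnC exprM.
  rewrite -(@XnsubC_prod _ _ _ _ pd (expf_neq0 j u0)).
  by apply: eq_bigr => i _; rewrite -exprM -exprD.
rewrite -[LHS](big_mkord (fun j => coprime j k) (fun j => \prod_(0 <= i < d) ('X - (u ^+ (j + k * i)%N)%:P))).
rewrite (double_prod _ k d (fun m => 'X - (u ^+ m)%:P)).
rewrite -(big_mkord (fun m => coprime m (k * d)%N) (fun m => 'X - (u ^+ m)%:P)).
apply: eq_bigl => m; rewrite coprimeMr.
case cmk: (coprime m k) => //=.
by rewrite (coprime_sub _ _ _ d0 H cmk).
Qed.

Theorem theorem3p1 (zeta : nat -> algC)
  (hzeta : forall d : nat, (0 < d)%N -> d.-primitive_root (zeta d))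
  (n : nat) (hn : (0 < n)%N) :
  ucycl zeta n = \prod_(d <- divisors n | kappa d == kappa n) cycl zeta d
  /\ ucycl zeta n = \prod_(d <- divisors (n %/ kappa n)) (cycl zeta (kappa n) \Po 'X^d).
Proof.
have pz := hzeta n hn.
have H1 : ucycl zeta n = \prod_(d <- divisors n | kappa d == kappa n) cycl zeta d.
  rewrite /ucycl (eq_bigl (fun j => kappa (n %/ gcdn j n) == kappa n)); last first.
    by move=> j; rewrite ugcd_kappa.
  rewrite big_mkcond shift_prod //; last first.
    by rewrite gcdnn gcd0n prim_expr_order // expr0.
  rewrite -big_mkcond big_mkord.
  rewrite (prod_cyclotomic_filter _ _ _ (fun d => kappa d == kappa n) pz).
  rewrite big_seq_cond [RHS]big_seq_cond; apply: eq_bigr => d /andP[]; rewrite -dvdn_divisors // => dn _.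
  have d0 : (0 < d)%N := dvdn_gt0 hn dn.
  by rewrite (cycl_cyclotomic zeta hzeta _ _ d0 (dvdn_prim_root pz dn)).
split => //; rewrite H1.
set K := kappa n.
have K0 : (0 < K)%N := kappa_gt0 n.
have Kn : (K %| n)%N := kappa_dvd n hn.
have nK0 : (0 < n %/ K)%N by rewrite divn_gt0 // dvdn_leq.
have nKn : (n %/ K %| n)%N := dvdn_div Kn.
transitivity (\prod_(d <- divisors (n %/ K)) cycl zeta (K * d)%N); last first.
  apply: eq_big_seq => d; rewrite -dvdn_divisors // => dK.
  have d0 : (0 < d)%N := dvdn_gt0 nK0 dK.
  symmetry; apply: cycl_comp => // p pp pd.
  by rewrite dvd_kappa //; apply: dvdn_trans pd (dvdn_trans dK nKn).
rewrite -big_filter -(big_map (muln K) predT (cycl zeta)).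
apply: perm_big; apply: uniq_perm.
- by apply: filter_uniq; apply: divisors_uniq.
- by rewrite (map_inj_uniq (@can_inj nat nat (muln K) (fun y => y %/ K)%N (fun x => mulKn x K0))) divisors_uniq.
move=> e; rewrite mem_filter -dvdn_divisors //; apply/andP/mapP.
  case=> /eqP ke en.
  have e0 : (0 < e)%N := dvdn_gt0 hn en.
  have Ke : (K %| e)%N by rewrite -ke; apply: kappa_dvd.
  exists (e %/ K)%N; last by rewrite mulnC divnK.
  by rewrite -dvdn_divisors // -(dvdn_pmul2r K0) !divnK.
case=> d; rewrite -dvdn_divisors // => dK ->.
have d0 : (0 < d)%N := dvdn_gt0 nK0 dK.
split; last by rewrite -(divnK Kn) mulnC dvdn_pmul2r.
apply/eqP; apply: kappa_eq; rewrite ?muln_gt0 ?K0 // => p pp.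
rewrite Euclid_dvdM // dvd_kappa //.
case pn: (p %| n)%N => //=; apply/negP => pd.
by move: pn; rewrite (dvdn_trans pd (dvdn_trans dK nKn)).
Qed.
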